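(* The at-the-point product of two cobweb tiling sequences need not be a cobweb tiling sequence. Specifically, let $A=(n_A)_{n\ge0}$ with $0_A=1$, $n_A=2$ for even $n\ge2$ and $n_A=1$ for odd $n$; and let $B=(n_B)_{n\ge0}$ with $0_B=1$, $n_B=3$ for $n\ge1$ with $3\mid n$ and $n_B=1$ otherwise. Then $A$ and $B$ are cobweb tiling sequences, while $A\cdot B$ (defined by $n_{A\cdot B}=n_A n_B$) is not a cobweb tiling sequence.
   Context: Notation: $n_F\equiv F_n$. A sequence $F=(n_F)_{n\ge0}$ of natural numbers with $0_F=1$ is cobweb-admissible iff every $F$-nomial coefficient $\binom{n}{k}_F=\frac{n_F(n-1)_F\cdots(n-k+1)_F}{1_F2_F\cdots k_F}$, $0\le k\le n$, is a nonnegative integer. The cobweb poset of $F$ has, for each $s\ge1$, a level $\Phi_s$ consisting of $s_F$ distinct vertices (levels pairwise disjoint), plus a root level $\Phi_0$ with one vertex; for $x\in\Phi_i$, $y\in\Phi_j$ one has $x<y$ iff $i<j$. For $1\le a\le b$, the layer $\langle\Phi_a\to\Phi_b\rangle$ is the subposet on $\Phi_a\cup\dots\cup\Phi_b$; it has $m=b-a+1$ levels and its maximal chains form the set $\Phi_a\times\dots\times\Phi_b$. For a permutation $\sigma$ of $\{1,\dots,m\}$, a block of type $\sigma P_m$ in this layer is the subposet induced on $V_a\cup\dots\cup V_b$ where $V_{a-1+i}\subseteq\Phi_{a-1+i}$ and $|V_{a-1+i}|=\sigma(i)_F$ for $i=1,\dots,m$; its maximal chains form the set $V_a\times\dots\times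 V_b$. A tiling of the layer is a finite family of such blocks ($\sigma$ may vary from block to block) whose sets $V_a\times\dots\times V_b$ partition $\Phi_a\times\dots\times\Phi_b$ (pairwise max-disjoint and covering all maximal chains). A cobweb tiling sequence is a cobweb-admissible sequence $F$ such that for all $1\le a\le b$ the layer $\langle\Phi_a\to\Phi_b\rangle$ admits a tiling by blocks of type $\sigma P_{b-a+1}$. *)

(* Defs.v *)
From Stdlib Require List.
From mathcomp Require Import all_boot all_fingroup.
Set Implicit Arguments. Unset Strict Implicit. Unset Printing Implicit Defensive.

(* F-nomial coefficient (n k)_F as numerator / denominator. *)
Definition fnom_num (F : nat -> nat) (n k : nat) : nat :=
  \prod_(0 <= i < k) F (n - i).
Definition fnom_den (F : nat -> nat) (k : nat) : nat :=
  \prod_(1 <= i < k.+1) F i.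

Definition cobweb_admissible (F : nat -> nat) : Prop :=
  F 0 = 1 /\
  forall n k, k <= n -> 0 < fnom_den F k /\ fnom_den F k %| fnom_num F n k.

(* Layer <Phi_a -> Phi_b> with m = b - a + 1 levels; index i : 'I_m stands for
   the paper's index i+1, i.e. level a + i.  Level Phi_s is {0, ..., s_F - 1}.
   A maximal chain is c : 'I_m -> nat with c i < F (a + i). *)
Definition is_chain (F : nat -> nat) (a m : nat) (c : 'I_m -> nat) : Prop :=
  forall i : 'I_m, c i < F (a + i).

(* A block: a permutation sigma of {1..m} (here of 'I_m, value sigma i + 1)
   and vertex sets V_(a+i) given as duplicate-free lists. *)
Record block (m : nat) := Block {
  bperm : {perm 'I_m};
  bsets : 'I_m -> seq nat
}.

Definition valid_block (F : nat -> nat) (a m : nat) (B : block m) : Prop :=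
  forall i : 'I_m,
    [/\ uniq (bsets B i),
        all (fun x => x < F (a + i)) (bsets B i) &
        size (bsets B i) = F (bperm B i).+1].

Definition chain_in_block (m : nat) (B : block m) (c : 'I_m -> nat) : bool :=
  [forall i : 'I_m, c i \in bsets B i].

Definition layer_tiling (F : nat -> nat) (a b : nat) : Prop :=
  exists T : seq (block (b - a).+1),
    (forall B, List.In B T -> valid_block F a B) /\
    (forall c : 'I_(b - a).+1 -> nat, is_chain F a c ->
        count (fun B => chain_in_block B c) T = 1).

Definition cobweb_tiling_sequence (F : nat -> nat) : Prop :=
  cobweb_admissible F /\
  forall a b, 1 <= a -> a <= b -> layer_tiling F a b.

Definition seqA (n : nat) : nat :=
  if n == 0 then 1 else if odd n then 1 else 2.
Definition seqB (n : nat) : nat :=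
  if n == 0 then 1 else if 3 %| n then 3 else 1.
Definition seq_prod (F G : nat -> nat) (n : nat) : nat := F n * G n.

(* Main.v *)
Require Import Defs.
From mathcomp Require Import all_boot all_fingroup.
Set Implicit Arguments. Unset Strict Implicit. Unset Printing Implicit Defensive.

Lemma num_step F n k : fnom_num F n.+1 k.+1 = F n.+1 * fnom_num F n k.
Proof.
rewrite /fnom_num big_nat_recl // subn0.
Qed.

Lemma num_den F n k : k <= n -> fnom_num F n k * fnom_den F (n - k) = fnom_den F n.
Proof.
elim: k n => [|k IH] [|n] //=.
- by move=> _; rewrite /fnom_num big_geq // mul1n.
- by move=> _; rewrite /fnom_num big_geq // mul1n subn0.
- move=> hk; rewrite num_step subSS -mulnA IH //.
  by rewrite /fnom_den (big_nat_recr n.+1) //= mulnC.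
Qed.

Definition Fpc (p c n : nat) := if n == 0 then 1 else if p %| n then c else 1.

Lemma den_pc F p c : 0 < p -> (forall n, F n = Fpc p c n) ->
  forall j, fnom_den F j = c ^ (j %/ p).
Proof.
move=> p0 hF; elim=> [|j IH].
  by rewrite div0n /fnom_den big_geq.
rewrite /fnom_den big_nat_recr //.
rewrite -/(fnom_den F j) IH hF /Fpc divnS //.
change (c ^ (j %/ p) * (if j.+1 == 0 then 1 else if p %| j.+1 then c else 1) = c ^ ((p %| j.+1) + j %/ p)).
case: (p %| j.+1).
  by rewrite expnS mulnC.
by rewrite muln1.
Qed.
Lemma adm_pc F p c : 0 < p -> 0 < c -> (forall n, F n = Fpc p c n) ->
  cobweb_admissible F.
Proof.
move=> p0 c0 hF; split; first by rewrite hF.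
move=> n k kn; rewrite (den_pc p0 hF) expn_gt0 c0; split=> //.
have := num_den F kn; rewrite !(den_pc p0 hF) => e.
rewrite -(@dvdn_pmul2r (c ^ ((n - k) %/ p))) ?expn_gt0 ?c0 // e -expnD.
apply: dvdn_exp2l.
have {2}-> : n = k + (n - k) by rewrite subnKC.
by rewrite divnD // leq_addr.
Qed.

Lemma In_mem (T : eqType) (x : T) (l : seq T) : List.In x l -> x \in l.
Proof.
elim: l => //= y l IH [->|h]; rewrite inE ?eqxx //.
by rewrite IH ?orbT.
Qed.

Lemma In_map (T : Type) (U : Type) (f : T -> U) (l : seq T) y :
  List.In y (map f l) -> exists x, List.In x l /\ y = f x.
Proof.
elim: l => //= x l IH [<-|h]; first by exists x; split; [left|].
by case: (IH h) => z [h1 h2]; exists z; split; [right|].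
Qed.

Section Tile.
Variables (F : nat -> nat) (a m N : nat) (s : {perm 'I_m}).
Hypothesis hs : forall i : 'I_m, F (s i).+1 = 1 \/ F (s i).+1 = F (a + i).
Hypothesis hN : forall i : 'I_m, F (a + i) <= N.

Definition full (i : 'I_m) : bool := F (s i).+1 != 1.
Definition mkB (r : {ffun 'I_m -> 'I_N.+1}) : block m :=
  Block s (fun i => if full i then iota 0 (F (a + i)) else [:: val (r i)]).
Definition goodr (r : {ffun 'I_m -> 'I_N.+1}) : bool :=
  [forall i, if full i then val (r i) == 0 else val (r i) < F (a + i)].
Definition TT : seq (block m) := map mkB [seq r <- enum {ffun 'I_m -> 'I_N.+1} | goodr r].

Lemma TT_valid B : List.In B TT -> valid_block F a B.
Proof.
case/(@In_map _ _ mkB)=> r [/In_mem hr ->] i.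
rewrite mem_filter in hr; case/andP: hr => /forallP /(_ i) g _.
rewrite /mkB /=; case: ifP => fi /=.
  rewrite iota_uniq size_iota; split=> //.
    by apply/allP=> x; rewrite mem_iota.
  by case: (hs i) => // e; move: fi; rewrite /full e.
rewrite fi in g; rewrite g; split=> //.
by move: fi; rewrite /full => /negbFE/eqP.
Qed.

Lemma TT_count c : is_chain F a c -> count (fun B => chain_in_block B c) TT = 1.
Proof.
move=> hc.
pose r0 : {ffun 'I_m -> 'I_N.+1} := [ffun i => inord (if full i then 0 else c i)].
rewrite /TT count_map count_filter.
rewrite (eq_count (a2 := pred1 r0)); last first.
  move=> r /=; apply/idP/eqP.
    case/andP=> /forallP hin /forallP hg; apply/ffunP=> i; apply/val_inj.
    rewrite ffunE /= inordK; last first.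
      case: ifP => _ //; exact: leq_trans (hc i) (leqW (hN i)).
    move: (hin i) (hg i); rewrite /mkB /=; case: ifP => _.
      by move=> _ /eqP.
    by rewrite inE => /eqP -> .
  move=> ->; apply/andP; split; apply/forallP=> i; rewrite /mkB /= ffunE inordK;
    try (case: ifP => _ //; exact: leq_trans (hc i) (leqW (hN i))).
    case E: (full i); first by rewrite mem_iota /= (hc i).
    by rewrite inE.
  by case E: (full i) => //; exact: hc.
by rewrite count_uniq_mem ?enum_uniq // mem_enum.
Qed.
End Tile.

Lemma tiling_pc F p c : 1 < p -> 0 < c -> (forall n, F n = Fpc p c n) ->
  forall a b, 1 <= a -> a <= b -> layer_tiling F a b.
Proof.
move=> p1 c0 hF a b a1 ab; rewrite /layer_tiling.
set m := b - a.
have p0 : 0 < p by apply: ltnW.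
pose t := (a - 1) %% p.
have tp : t < p by apply: ltn_pmod.
pose f (i : 'I_m.+1) : 'I_m.+1 := Ordinal (ltn_pmod (i + t) (ltn0Sn m)).
have finj : injective f.
  move=> i j /(congr1 val) /= /eqP; rewrite eqn_modDr.
  by rewrite !modn_small // => /eqP e; apply: val_inj.
pose s := perm finj.
have hN : forall i : 'I_m.+1, F (a + i) <= c.
  by move=> i; rewrite hF /Fpc; case: ifP => _ //; case: ifP.
have hs : forall i : 'I_m.+1, F (s i).+1 = 1 \/ F (s i).+1 = F (a + i).
  move=> i; rewrite permE /=.
  have [xl|xg] := ltnP (i + t) m.+1.
    right; rewrite modn_small // !hF /Fpc /=.
    have -> : (a + i == 0) = false by move: a1; case: (a).
    suff -> : (p %| (i + t).+1) = (p %| a + i) by [].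
    rewrite /dvdn; congr (_ == 0).
    rewrite -addn1 addnAC /t modnDmr; congr (_ %% p).
    by rewrite -addnA subnKC // addnC.
  left; set y := (i + t) %% m.+1.
  have hy : y + m.+1 <= i + t.
    rewrite [X in _ <= X](divn_eq (i + t) m.+1) addnC -/y leq_add2r.
    by rewrite -{1}(mul1n m.+1) leq_mul2r divn_gt0 // xg orbT.
  have yt : y < t.
    have : y + m.+1 < m.+1 + t.
      by apply: leq_ltn_trans hy _; rewrite ltn_add2r ltn_ord.
    by rewrite addnC ltn_add2l.
  rewrite hF /Fpc /=.
  case: ifP => // /(dvdn_leq (ltn0Sn y)) hle.
  by move: (leq_ltn_trans hle (leq_ltn_trans yt tp)); rewrite ltnn.
exists (TT F a c s); split.
  exact: TT_valid hs.
exact: TT_count hN.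
Qed.

Lemma uniq_bound (s : seq nat) n : uniq s -> all (fun x => x < n) s -> size s <= n.
Proof.
move=> u /allP h; rewrite -(size_iota 0 n); apply: uniq_leq_size => // x /h.
by rewrite mem_iota.
Qed.

Lemma AB_not : ~ cobweb_tiling_sequence (seq_prod seqA seqB).
Proof.
case=> _ /(_ 5 7 isT isT) [T [hv hc]].
have hch : is_chain (seq_prod seqA seqB) 5 (fun _ : 'I_(7 - 5).+1 => 0).
  by case=> [[|[|[|k]]] hk].
have := hc _ hch; clear hc.
case: T hv => [|B T] hv //.
move=> _; have vB := hv B (or_introl erefl).
have b0 := vB ord0; have b2 := vB (@Ordinal 3 2 isT).
case: b0 => u0 a0 s0; case: b2 => u2 a2 s2.
have := uniq_bound u0 a0; have := uniq_bound u2 a2.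
rewrite s0 s2.
have := @perm_inj _ (bperm B) ord0 (@Ordinal 3 2 isT).
case: (bperm B ord0) => [[|[|[|k]]] hk] //=;
case: (bperm B (@Ordinal 3 2 isT)) => [[|[|[|k']]] hk'] //=.
by rewrite (bool_irrelevance hk' hk) => /(_ erefl) /(congr1 val).
Qed.

Lemma seqA_pc n : seqA n = Fpc 2 2 n.
Proof. by rewrite /seqA /Fpc dvdn2; case: (n == 0) => //; case: (odd n). Qed.
Lemma seqB_pc n : seqB n = Fpc 3 3 n.
Proof. by []. Qed.

Theorem mainTheorem4 :
  cobweb_tiling_sequence seqA /\ cobweb_tiling_sequence seqB /\
  ~ cobweb_tiling_sequence (seq_prod seqA seqB).
Proof.
split; [|split; last exact: AB_not].
  split; first exact: (@adm_pc _ 2 2 isT isT seqA_pc).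
  exact: (@tiling_pc _ 2 2 isT isT seqA_pc).
split; first exact: (@adm_pc _ 3 3 isT isT seqB_pc).
exact: (@tiling_pc _ 3 3 isT isT seqB_pc).
Qed.
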